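(* Let $\sigma$ be an sp-formula that contains the diamond $\Diamond_S$ but does not contain $\Diamond_R$, and let $q$ be a propositional variable not occurring in $\sigma$. Then the spi-logic $\mathsf{SPi}+\{\Diamond_R\sigma\to q\}$ is incomplete.
   Context: Multimodal setting with a signature of relation symbols and diamonds $\Diamond_R$. Sp-formulas: built from propositional variables and $\top$ by $\wedge$ and the diamonds; sp-implications $\sigma\to\tau$. A SLO is an algebra $(A,\wedge,\top,\Diamond_R)_R$ with $(A,\wedge,\top)$ a meet-semilattice with top and each $\Diamond_R$ monotone; it validates $\sigma\to\tau$ if $\sigma[\mathfrak a]\le\tau[\mathfrak a]$ for all valuations. Frames $(W,R^{\mathfrak F})_R$ with standard Kripke semantics. $\Sigma\models_{\mathsf{Kr}}\iota$ (resp. $\models_{\mathsf{SLO}}$): valid in all frames (resp. SLOs) validating $\Sigma$. $\mathsf{SPi}+\Sigma$ is complete if $\Sigma\models_{\mathsf{Kr}}\iota\iff\Sigma\models_{\mathsf{SLO}}\iota$ for every sp-implication $\iota$, and incomplete otherwise. *)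

(* Defs.v *)
Set Implicit Arguments.

Section Syntax.
Variable Sig : Type. (* relation symbols; propositional variables are nat *)

Inductive spf : Type :=
| Var : nat -> spf
| Top : spf
| And : spf -> spf -> spf
| Dia : Sig -> spf -> spf.

Record spi : Type := Imp { ante : spf; cons : spf }.

Fixpoint has_dia (r : Sig) (f : spf) : Prop :=
  match f with
  | Var _ => False
  | Top => False
  | And a b => has_dia r a \/ has_dia r b
  | Dia s a => s = r \/ has_dia r a
  end.

Fixpoint has_var (p : nat) (f : spf) : Prop :=
  match f with
  | Var q => q = p
  | Top => False
  | And a b => has_var p a \/ has_var p b
  | Dia _ a => has_var p a
  end.

Record SLO : Type := {
  carrier :> Type;
  meet : carrier -> carrier -> carrier;
  top : carrier;
  dia : Sig -> carrier -> carrier;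
  meetA : forall x y z, meet x (meet y z) = meet (meet x y) z;
  meetC : forall x y, meet x y = meet y x;
  meetI : forall x, meet x x = x;
  meetT : forall x, meet x top = x;
  dia_mono : forall r x y, meet x y = x -> meet (dia r x) (dia r y) = dia r x
}.

Definition sle (A : SLO) (x y : A) : Prop := meet A x y = x.

Fixpoint sval (A : SLO) (v : nat -> A) (f : spf) : A :=
  match f with
  | Var p => v p
  | Top => top A
  | And a b => meet A (sval A v a) (sval A v b)
  | Dia r a => dia A r (sval A v a)
  end.

Definition slo_valid (A : SLO) (i : spi) : Prop :=
  forall v : nat -> A, sle A (sval A v (ante i)) (sval A v (cons i)).

Record frame : Type := {
  world : Type;
  acc : Sig -> world -> world -> Prop
}.

Fixpoint sat (F : frame) (V : nat -> world F -> Prop) (w : world F) (f : spf) : Prop :=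
  match f with
  | Var p => V p w
  | Top => True
  | And a b => sat F V w a /\ sat F V w b
  | Dia r a => exists u, acc F r w u /\ sat F V u a
  end.

Definition frame_valid (F : frame) (i : spi) : Prop :=
  forall (V : nat -> world F -> Prop) (w : world F), sat F V w (ante i) -> sat F V w (cons i).

Definition kr_entails (Sg : spi -> Prop) (i : spi) : Prop :=
  forall F : frame, (forall j, Sg j -> frame_valid F j) -> frame_valid F i.

Definition slo_entails (Sg : spi -> Prop) (i : spi) : Prop :=
  forall A : SLO, (forall j, Sg j -> slo_valid A j) -> slo_valid A i.

Definition complete (Sg : spi -> Prop) : Prop :=
  forall i : spi, kr_entails Sg i <-> slo_entails Sg i.

Definition incomplete (Sg : spi -> Prop) : Prop := ~ complete Sg.

End Syntax.

(* Main.v *)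
Require Import Defs.
From Stdlib Require Import PropExtensionality Arith.

Lemma sat_agree (Sig : Type) (F : frame Sig) (V V' : nat -> world F -> Prop) (q : nat)
  (HV : forall p x, p <> q -> (V p x <-> V' p x)) :
  forall f, ~ has_var q f -> forall w, sat F V w f <-> sat F V' w f.
Proof.
  induction f as [p| |a IHa b IHb|r a IHa]; simpl; intros Hq w.
  - apply HV. intro; apply Hq; auto.
  - tauto.
  - rewrite IHa, IHb; tauto.
  - split; intros [u [Hu Hs]]; exists u; split; auto; apply (IHa Hq); auto.
Qed.

Definition PSLO (Sig : Type) (R : Sig) : SLO Sig.
Proof.
  refine (@Build_SLO Sig Prop and True (fun r _ => r <> R) _ _ _ _ _);
  intros; apply propositional_extensionality; tauto.
Defined.

Theorem theorem5p25 (Sig : Type) (R S : Sig) (sigma : spf Sig) (q : nat) :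
  has_dia S sigma -> ~ has_dia R sigma -> ~ has_var q sigma ->
  incomplete (fun j => j = Imp (Dia R sigma) (Var Sig q)).
Proof.
  intros HS HR Hq Hc.
  assert (HSR : S <> R).
  { intro E; subst; contradiction. }
  destruct (Hc (Imp (Dia S (Dia R sigma)) (Var Sig q))) as [H1 _].
  assert (HK : kr_entails (fun j => j = Imp (Dia R sigma) (Var Sig q))
                 (Imp (Dia S (Dia R sigma)) (Var Sig q))).
  { intros F HF V w; simpl. intros [u [_ [u' [Hu' Hs]]]].
    set (V' := fun p x => if Nat.eq_dec p q then False else V p x).
    assert (Hs' : sat F V' u' sigma).
    { apply (@sat_agree Sig F V V' q); auto.
      intros p x Hp; unfold V'; destruct (Nat.eq_dec p q); tauto. }
    exfalso.
    pose proof (HF _ eq_refl V' u) as H; simpl in H.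
    assert (X : V' q u) by (apply H; exists u'; auto).
    unfold V' in X; destruct (Nat.eq_dec q q); [exact X | congruence]. }
  specialize (H1 HK (@PSLO Sig R)).
  assert (HA : forall j, j = Imp (Dia R sigma) (Var Sig q) -> slo_valid (@PSLO Sig R) j).
  { intros j ->; intros v; unfold sle; simpl.
    apply propositional_extensionality; split; [tauto|]. intro H; split; auto. congruence. }
  specialize (H1 HA (fun _ => False)). unfold sle in H1; simpl in H1.
  assert (E : S <> R) by exact HSR.
  rewrite <- H1 in E. destruct E; auto.
Qed.
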